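(* Let $G$ be a disconnected graph which has only finitely many non-trivial connected components, and such that for each connected component $H$ of $G$, every connected graph equimorphic to $H$ is isomorphic to $H$. Then either $G$ has infinitely many pairwise non-isomorphic disconnected siblings, or every sibling of $G$ is isomorphic to $G$.
   Context: Graphs are undirected and loopless. $G$ embeds into $G'$ if $G$ is isomorphic to an induced subgraph of $G'$; $G,G'$ are equimorphic if each embeds into the other; a sibling of $G$ is a graph equimorphic to $G$. A connected component is trivial if it consists of a single vertex. *)

(* Defs.v *)
From Stdlib Require Import List.

Record graph := Graph {
  vert :> Type;
  adj : vert -> vert -> Prop;
  adj_sym : forall x y, adj x y -> adj y x;
  adj_irrefl : forall x, ~ adj x x
}.

Definition embedding (G G' : graph) (f : vert G -> vert G') : Prop :=
  (forall x y, f x = f y -> x = y) /\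
  (forall x y, adj G x y <-> adj G' (f x) (f y)).

Definition embeds (G G' : graph) : Prop := exists f, embedding G G' f.

Definition isomorphic (G G' : graph) : Prop :=
  exists f, embedding G G' f /\ (forall y, exists x, f x = y).

Definition equimorphic (G G' : graph) : Prop := embeds G G' /\ embeds G' G.

Definition sibling (G' G : graph) : Prop := equimorphic G' G.

Inductive conn (G : graph) : vert G -> vert G -> Prop :=
| conn_refl : forall x, conn G x x
| conn_step : forall x y z, adj G x y -> conn G y z -> conn G x z.

Definition connected (G : graph) : Prop :=
  inhabited (vert G) /\ forall x y, conn G x y.

Definition disconnected (G : graph) : Prop := ~ connected G.

Definition comp_vert (G : graph) (v : vert G) : Type := { x : vert G | conn G v x }.

Definition comp_adj (G : graph) (v : vert G) (a b : comp_vert G v) : Prop :=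
  adj G (proj1_sig a) (proj1_sig b).

Lemma comp_adj_sym (G : graph) (v : vert G) :
  forall a b, comp_adj G v a b -> comp_adj G v b a.
Proof. intros a b; apply adj_sym. Qed.

Lemma comp_adj_irrefl (G : graph) (v : vert G) : forall a, ~ comp_adj G v a a.
Proof. intros a; apply adj_irrefl. Qed.

Definition component (G : graph) (v : vert G) : graph :=
  Graph (comp_vert G v) (comp_adj G v) (comp_adj_sym G v) (comp_adj_irrefl G v).

Definition nontrivial_comp (G : graph) (v : vert G) : Prop :=
  exists x, conn G v x /\ x <> v.

Definition fin_many_nontrivial_comps (G : graph) : Prop :=
  exists l : list (vert G),
    forall v, nontrivial_comp G v -> exists w, In w l /\ conn G w v.

(* Main.v *)
Require Import Defs.
From Stdlib Require Import List Lia Arith Classical ClassicalEpsilon FunctionalExtensionality PropExtensionality ProofIrrelevance.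
Import ListNotations.

Definition inj (X Y : Type) := exists f : X -> Y, forall a b, f a = f b -> a = b.
Definition bij (X Y : Type) :=
  exists f : X -> Y, (forall a b, f a = f b -> a = b) /\ (forall y, exists x, f x = y).
Definition finite (X : Type) := exists l : list X, forall x, In x l.

Lemma inj_refl X : inj X X.
Proof. exists (fun x => x); auto. Qed.

Lemma inj_trans X Y Z : inj X Y -> inj Y Z -> inj X Z.
Proof. intros [f hf] [g hg]. exists (fun x => g (f x)). intros a b h; auto. Qed.

Definition cid {A} {P : A -> Prop} (h : exists x, P x) := proj1_sig (constructive_indefinite_description P h).
Lemma cid_spec {A} {P : A -> Prop} (h : exists x, P x) : P (cid h).
Proof. unfold cid. exact (proj2_sig _). Qed.

Fixpoint lstn {X} (next : list X -> X) (n : nat) : list X :=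
  match n with 0 => nil | S n => next (lstn next n) :: lstn next n end.

Lemma inf_nat X : ~ finite X -> exists j : nat -> X, forall a b, j a = j b -> a = b.
Proof.
  intro Hf.
  assert (Hn : forall l : list X, exists x, ~ In x l).
  { intro l. apply NNPP; intro h. apply Hf. exists l. intro x.
    apply NNPP; intro h2. apply h; eauto. }
  set (next := fun l => cid (Hn l)).
  assert (Hnext : forall l, ~ In (next l) l) by (intro l; exact (cid_spec (Hn l))).
  exists (fun n => next (lstn next n)).
  assert (Hin : forall m n, m < n -> In (next (lstn next m)) (lstn next n)).
  { intros m n; induction n; intro h. lia. simpl.
    destruct (Nat.eq_dec m n). subst; left; auto. right; apply IHn; lia. }
  intros a b h. destruct (lt_eq_lt_dec a b) as [[l|e]|l]; auto.
  - exfalso. apply (Hnext (lstn next b)). rewrite <- h. apply Hin; auto.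
  - exfalso. apply (Hnext (lstn next a)). rewrite h. apply Hin; auto.
Qed.

Section SB.
Variables (X Y : Type) (f : X -> Y) (g : Y -> X).
Inductive SBC : X -> Prop :=
| SBC0 x : (~ exists y, g y = x) -> SBC x
| SBC1 x : SBC x -> SBC (g (f x)).
End SB.

Lemma SB X Y : inj X Y -> inj Y X -> bij X Y.
Proof.
  intros [f hf] [g hg].
  set (ginv := fun x => match excluded_middle_informative (exists y, g y = x) with
                        | left h => cid h | right _ => f x end).
  assert (Hginv : forall x, (exists y, g y = x) -> g (ginv x) = x).
  { intros x h. unfold ginv. destruct excluded_middle_informative; [|contradiction].
    exact (cid_spec e). }
  set (h := fun x => if excluded_middle_informative (SBC X Y f g x) then f x else ginv x).
  exists h. split.
  - intros a b e. unfold h in e.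
    destruct (excluded_middle_informative (SBC X Y f g a)) as [ca|ca];
    destruct (excluded_middle_informative (SBC X Y f g b)) as [cb|cb]; auto.
    + exfalso. apply cb.
      assert (Eb : exists y, g y = b) by (apply NNPP; intro hn; apply cb; constructor; auto).
      rewrite <- (Hginv b Eb), <- e. apply SBC1; auto.
    + exfalso. apply ca.
      assert (Ea : exists y, g y = a) by (apply NNPP; intro hn; apply ca; constructor; auto).
      rewrite <- (Hginv a Ea), e. apply SBC1; auto.
    + assert (Ea : exists y, g y = a) by (apply NNPP; intro hn; apply ca; constructor; auto).
      assert (Eb : exists y, g y = b) by (apply NNPP; intro hn; apply cb; constructor; auto).
      rewrite <- (Hginv a Ea), <- (Hginv b Eb), e; auto.
  - intro y. destruct (classic (SBC X Y f g (g y))) as [c|c].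
    + inversion c as [x0 hn e|x' cx' e].
      * exfalso; apply hn; eauto.
      * apply hg in e. exists x'. unfold h. destruct excluded_middle_informative; [auto|contradiction].
    + exists (g y). unfold h. destruct excluded_middle_informative; [contradiction|].
      apply hg. apply Hginv. eauto.
Qed.

Section Zorn.
Variable U : Type.
Definition sub (R S : U -> Prop) := forall u, R u -> S u.
Definition chain (C : (U -> Prop) -> Prop) := forall R S, C R -> C S -> sub R S \/ sub S R.
Definition bigU (C : (U -> Prop) -> Prop) : U -> Prop := fun u => exists R, C R /\ R u.

Lemma set_ext (R S : U -> Prop) : sub R S -> sub S R -> R = S.
Proof. intros h1 h2. apply functional_extensionality; intro u.
  apply propositional_extensionality; split; auto. Qed.

Variable succ : (U -> Prop) -> (U -> Prop).
Hypothesis succ_ext : forall M, sub M (succ M).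

Inductive Tw : (U -> Prop) -> Prop :=
| Ts M : Tw M -> Tw (succ M)
| Tu C : (forall R, C R -> Tw R) -> Tw (bigU C).

Lemma tw1 n : Tw n -> forall m, Tw m ->
  (forall x, Tw x -> sub x m -> x = m \/ sub (succ x) m) -> sub n m \/ sub (succ m) n.
Proof.
  induction 1 as [x Tx IH | C HC IH]; intros m Tm Hm.
  - destruct (IH m Tm Hm) as [h|h].
    + destruct (Hm x Tx h) as [e|h'].
      * right. subst. intros u hu; exact hu.
      * left; exact h'.
    + right. intros u hu. apply succ_ext. apply h; auto.
  - destruct (classic (exists R, C R /\ sub (succ m) R)) as [[R [CR hR]]|hn].
    + right. intros u hu. exists R. split; auto.
    + left. intros u [R [CR hR]]. destruct (IH R CR m Tm Hm) as [h|h].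
      * apply h; auto.
      * exfalso; apply hn; eauto.
Qed.

Lemma tw2 m : Tw m -> forall n, Tw n -> sub n m -> n = m \/ sub (succ n) m.
Proof.
  induction 1 as [x Tx IH | C HC IH]; intros n Tn hnm.
  - destruct (tw1 n Tn x Tx IH) as [h|h].
    + destruct (IH n Tn h) as [e|h'].
      * subst. right. intros u hu; exact hu.
      * right. intros u hu; apply succ_ext; auto.
    + left. apply set_ext; auto.
  - destruct (classic (exists R, C R /\ sub (succ n) R)) as [[R [CR hR]]|hn].
    + right. intros u hu. exists R; auto.
    + left. apply set_ext; auto. intros u [R [CR hR]].
      destruct (tw1 n Tn R (HC R CR) (IH R CR)) as [h|h].
      * destruct (IH R CR n Tn h) as [e|h'].
        -- subst; auto.
        -- exfalso; apply hn; eauto.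
      * apply h. apply succ_ext. auto.
Qed.

Lemma tw_lin n m : Tw n -> Tw m -> sub n m \/ sub m n.
Proof.
  intros Tn Tm. destruct (tw1 n Tn m Tm (tw2 m Tm)) as [h|h]; auto.
  right. intros u hu. apply h, succ_ext, hu.
Qed.
End Zorn.

Lemma zorn (U : Type) (good : (U -> Prop) -> Prop) :
  (forall C, (forall R, C R -> good R) -> chain U C -> good (bigU U C)) ->
  exists M, good M /\ forall R, good R -> sub U M R -> sub U R M.
Proof.
  intro H. apply NNPP; intro Hno.
  assert (Hs : forall M, good M -> exists R, good R /\ sub U M R /\ ~ sub U R M).
  { intros M gM. apply NNPP; intro Hn. apply Hno. exists M. split; auto.
    intros R gR sMR. apply NNPP; intro h. apply Hn; eauto. }
  set (succ := fun M => match excluded_middle_informative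
                               (exists R, good R /\ sub U M R /\ ~ sub U R M) with
                        | left p => cid p | right _ => M end).
  assert (succ_ext : forall M, sub U M (succ M)).
  { intro M. unfold succ. destruct excluded_middle_informative as [p|p].
    - exact (proj1 (proj2 (cid_spec p))).
    - intros u hu; exact hu. }
  assert (Hg : forall M, Tw U succ M -> good M).
  { induction 1 as [M TM IH | C HC IH].
    - unfold succ. destruct excluded_middle_informative as [p|p].
      + exact (proj1 (cid_spec p)).
      + exact IH.
    - apply H; auto. intros R S CR CS. apply (tw_lin U succ succ_ext); auto. }
  set (M := bigU U (Tw U succ)).
  assert (TM : Tw U succ M) by (apply Tu; auto).
  assert (gM := Hg M TM).
  assert (hsub : sub U (succ M) M).
  { intros u hu. exists (succ M). split; auto. apply Ts; auto. }
  revert hsub. unfold succ. destruct excluded_middle_informative as [p|p].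
  - exact (proj2 (proj2 (cid_spec p))).
  - exfalso; apply p; auto.
Qed.

Lemma compar X Y : inj X Y \/ inj Y X.
Proof.
  set (good := fun R : X * Y -> Prop =>
     (forall x y y', R (x,y) -> R (x,y') -> y = y') /\
     (forall x x' y, R (x,y) -> R (x',y) -> x = x')).
  destruct (zorn (X * Y) good) as [M [[gM1 gM2] Mmax]].
  { intros C HC Hch. split.
    - intros x y y' [R1 [C1 h1]] [R2 [C2 h2]].
      destruct (Hch R1 R2 C1 C2) as [s|s].
      + apply (proj1 (HC R2 C2) x); auto.
      + apply (proj1 (HC R1 C1) x); auto.
    - intros x x' y [R1 [C1 h1]] [R2 [C2 h2]].
      destruct (Hch R1 R2 C1 C2) as [s|s].
      + apply (proj2 (HC R2 C2) x x' y); auto.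
      + apply (proj2 (HC R1 C1) x x' y); auto. }
  destruct (classic (forall x, exists y, M (x,y))) as [Ht|Ht].
  { left. exists (fun x => cid (Ht x)). intros a b e.
    apply (gM2 a b (cid (Ht a))). exact (cid_spec (Ht a)). rewrite e. exact (cid_spec (Ht b)). }
  destruct (classic (forall y, exists x, M (x,y))) as [Hs|Hs].
  { right. exists (fun y => cid (Hs y)). intros a b e.
    apply (gM1 (cid (Hs a)) a b). exact (cid_spec (Hs a)). rewrite e. exact (cid_spec (Hs b)). }
  exfalso.
  apply not_all_ex_not in Ht. destruct Ht as [x0 Hx0].
  apply not_all_ex_not in Hs. destruct Hs as [y0 Hy0].
  assert (G : good (fun p => M p \/ p = (x0,y0))).
  { split.
    - intros x y y' [h|h] [h'|h'].
      + eauto.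
      + injection h'; intros; subst. exfalso; apply Hx0; eauto.
      + injection h; intros; subst. exfalso; apply Hx0; eauto.
      + injection h; injection h'; intros; subst; auto.
    - intros x x' y [h|h] [h'|h'].
      + eauto.
      + injection h'; intros; subst. exfalso; apply Hy0; eauto.
      + injection h; intros; subst. exfalso; apply Hy0; eauto.
      + injection h; injection h'; intros; subst; auto. }
  assert (S := Mmax _ G (fun u hu => or_introl hu) (x0,y0) (or_intror eq_refl)).
  apply Hx0; eauto.
Qed.

Section Double.
Variable X : Type.
Definition prj (p : X + X) : X := match p with inl x => x | inr x => x end.
Definition supp (R : (X + X) * X -> Prop) (x : X) := exists q, R (q, x).
Definition good0 (R : (X + X) * X -> Prop) :=
  (forall p y y', R (p,y) -> R (p,y') -> y = y') /\
  (forall p p' y, R (p,y) -> R (p',y) -> p = p') /\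
  (forall x, (exists y, R (inl x, y)) <-> supp R x) /\
  (forall x, (exists y, R (inr x, y)) <-> supp R x).

Lemma good0_ext R1 R2 : (forall p, R1 p <-> R2 p) -> good0 R1 -> good0 R2.
Proof.
  intros e [h1 [h2 [h3 h4]]]. unfold supp in *. split; [|split; [|split]].
  - intros p y y' a b. apply e in a; apply e in b; eauto.
  - intros p p' y a b. apply e in a; apply e in b; eauto.
  - intro x. split.
    + intros [y hy]. apply e in hy. destruct (proj1 (h3 x) (ex_intro _ y hy)) as [q hq].
      exists q; apply e; auto.
    + intros [q hq]. apply e in hq. destruct (proj2 (h3 x) (ex_intro _ q hq)) as [y hy].
      exists y; apply e; auto.
  - intro x. split.
    + intros [y hy]. apply e in hy. destruct (proj1 (h4 x) (ex_intro _ y hy)) as [q hq].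
      exists q; apply e; auto.
    + intros [q hq]. apply e in hq. destruct (proj2 (h4 x) (ex_intro _ q hq)) as [y hy].
      exists y; apply e; auto.
Qed.

Definition extk (k : nat -> X) (p : (X + X) * X) :=
  exists n, p = (inl (k n), k (2*n)) \/ p = (inr (k n), k (2*n+1)).

Lemma supp_extk k x : supp (extk k) x <-> exists n, x = k n.
Proof.
  split.
  - intros [q [n [h|h]]]; injection h; intros; subst; eauto.
  - intros [n e]. subst. destruct (Nat.Even_or_Odd n) as [[m hm]|[m hm]]; subst.
    + exists (inl (k m)), m; left; auto.
    + exists (inr (k m)), m; right; auto.
Qed.

Lemma good0_extk k : (forall a b, k a = k b -> a = b) -> good0 (extk k).
Proof.
  intro hk. split; [|split; [|split]].
  - intros p y y' [n [h|h]] [m [h'|h']]; injection h as Hp Hy; injection h' as Hp' Hy';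
      subst; try discriminate.
    + injection Hp' as e; apply hk in e; subst; auto.
    + injection Hp' as e; apply hk in e; subst; auto.
  - intros p p' y [n [h|h]] [m [h'|h']]; injection h as Hp Hy; injection h' as Hp' Hy';
      subst; apply hk in Hy'; try lia.
    + assert (n = m) by lia; subst; auto.
    + assert (n = m) by lia; subst; auto.
  - intro x. rewrite supp_extk. split.
    + intros [y [n [h|h]]]; injection h; intros; subst; eauto. discriminate.
    + intros [n e]; subst. exists (k (2*n)), n; left; auto.
  - intro x. rewrite supp_extk. split.
    + intros [y [n [h|h]]]; injection h; intros; subst; eauto. discriminate.
    + intros [n e]; subst. exists (k (2*n+1)), n; right; auto.
Qed.
End Double.

Lemma good0_union X R1 R2 : good0 X R1 -> good0 X R2 ->
  (forall x, supp X R1 x -> supp X R2 x -> False) -> good0 X (fun p => R1 p \/ R2 p).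
Proof.
  intros [a1 [b1 [c1 d1]]] [a2 [b2 [c2 d2]]] hd. unfold supp in *.
  assert (k1 : forall p y, R1 (p,y) -> supp X R1 (prj X p)).
  { intros [x|x] y h; [apply c1|apply d1]; eauto. }
  assert (k2 : forall p y, R2 (p,y) -> supp X R2 (prj X p)).
  { intros [x|x] y h; [apply c2|apply d2]; eauto. }
  split; [|split; [|split]].
  - intros p y y' [h|h] [h'|h']; eauto; exfalso.
    + exact (hd _ (k1 _ _ h) (k2 _ _ h')).
    + exact (hd _ (k1 _ _ h') (k2 _ _ h)).
  - intros p p' y [h|h] [h'|h']; eauto; exfalso.
    + exact (hd y (ex_intro _ _ h) (ex_intro _ _ h')).
    + exact (hd y (ex_intro _ _ h') (ex_intro _ _ h)).
  - intro x. split.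
    + intros [y [h|h]].
      * destruct (proj1 (c1 x) (ex_intro _ y h)) as [q hq]; exists q; auto.
      * destruct (proj1 (c2 x) (ex_intro _ y h)) as [q hq]; exists q; auto.
    + intros [q [h|h]].
      * destruct (proj2 (c1 x) (ex_intro _ q h)) as [y hy]; exists y; auto.
      * destruct (proj2 (c2 x) (ex_intro _ q h)) as [y hy]; exists y; auto.
  - intro x. split.
    + intros [y [h|h]].
      * destruct (proj1 (d1 x) (ex_intro _ y h)) as [q hq]; exists q; auto.
      * destruct (proj1 (d2 x) (ex_intro _ y h)) as [q hq]; exists q; auto.
    + intros [q [h|h]].
      * destruct (proj2 (d1 x) (ex_intro _ q h)) as [y hy]; exists y; auto.
      * destruct (proj2 (d2 x) (ex_intro _ q h)) as [y hy]; exists y; auto.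
Qed.

Lemma double X : ~ finite X -> inj (X + X) X.
Proof.
  intro Hf. destruct (inf_nat X Hf) as [j hj].
  set (b := extk X j).
  assert (gb : good0 X b) by (apply good0_extk; auto).
  set (good := fun R => good0 X (fun p => R p \/ b p)).
  destruct (zorn _ good) as [M [gM Mmax]].
  { intros C HC Hch. unfold good.
    set (Un := fun p => bigU _ C p \/ b p).
    assert (two : forall p1 p2, Un p1 -> Un p2 ->
               exists R0, good0 X R0 /\ R0 p1 /\ R0 p2 /\ sub _ R0 Un).
    { intros p1 p2 [[R1 [C1 h1]]|h1] [[R2 [C2 h2]]|h2].
      - destruct (Hch R1 R2 C1 C2) as [s|s].
        + exists (fun p => R2 p \/ b p). split; [apply HC; auto|].
          split; [left; auto|]. split; [left; auto|].
          intros u [hu|hu]; [left; exists R2; auto|right; auto].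
        + exists (fun p => R1 p \/ b p). split; [apply HC; auto|].
          split; [left; auto|]. split; [left; auto|].
          intros u [hu|hu]; [left; exists R1; auto|right; auto].
      - exists (fun p => R1 p \/ b p). split; [apply HC; auto|].
        split; [left; auto|]. split; [right; auto|].
        intros u [hu|hu]; [left; exists R1; auto|right; auto].
      - exists (fun p => R2 p \/ b p). split; [apply HC; auto|].
        split; [right; auto|]. split; [left; auto|].
        intros u [hu|hu]; [left; exists R2; auto|right; auto].
      - exists b. split; auto. split; auto. split; auto. intros u hu; right; auto. }
    split; [|split; [|split]].
    - intros p y y' h h'. destruct (two _ _ h h') as [R0 [g0 [r1 [r2 _]]]].
      exact (proj1 g0 p y y' r1 r2).
    - intros p p' y h h'. destruct (two _ _ h h') as [R0 [g0 [r1 [r2 _]]]].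
      exact (proj1 (proj2 g0) p p' y r1 r2).
    - intro x. split.
      + intros [y h]. destruct (two _ _ h h) as [R0 [g0 [r1 [_ s]]]].
        destruct (proj1 (proj1 (proj2 (proj2 g0)) x) (ex_intro _ y r1)) as [q hq].
        exists q; apply s; auto.
      + intros [q h]. destruct (two _ _ h h) as [R0 [g0 [r1 [_ s]]]].
        destruct (proj2 (proj1 (proj2 (proj2 g0)) x) (ex_intro _ q r1)) as [y hy].
        exists y; apply s; auto.
    - intro x. split.
      + intros [y h]. destruct (two _ _ h h) as [R0 [g0 [r1 [_ s]]]].
        destruct (proj1 (proj2 (proj2 (proj2 g0)) x) (ex_intro _ y r1)) as [q hq].
        exists q; apply s; auto.
      + intros [q h]. destruct (two _ _ h h) as [R0 [g0 [r1 [_ s]]]].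
        destruct (proj2 (proj2 (proj2 (proj2 g0)) x) (ex_intro _ q r1)) as [y hy].
        exists y; apply s; auto. }
  set (M' := fun p => M p \/ b p).
  set (S := supp X M').
  destruct gM as [gf [gi [gl gr]]]. fold M' in gf, gi, gl, gr.
  assert (Hfin : finite {x | ~ S x}).
  { apply NNPP; intro hinf. destruct (inf_nat _ hinf) as [k hk].
    set (kk := fun n => proj1_sig (k n)).
    assert (hkk : forall a c, kk a = kk c -> a = c).
    { intros a c e. apply hk. apply eq_sig_hprop; auto. intros; apply proof_irrelevance. }
    assert (G : good (fun p => M p \/ extk X kk p)).
    { unfold good. apply good0_ext with (fun p => M' p \/ extk X kk p).
      { intro p; unfold M'; tauto. }
      apply good0_union; auto.
      - split; auto.
      - apply good0_extk; auto.
      - intros x h1 h2. apply supp_extk in h2. destruct h2 as [n e]. subst.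
        exact (proj2_sig (k n) h1). }
    assert (s := Mmax _ G (fun u hu => or_introl hu)).
    assert (h0 : M (inl (kk 0), kk (2*0))) by (apply s; right; exists 0; left; auto).
    apply (proj2_sig (k 0)). fold (kk 0). apply gl. exists (kk (2*0)). left; auto. }
  destruct Hfin as [Fl HFl].
  set (Fl' := map (@proj1_sig _ _) Fl).
  assert (HF : forall x, ~ S x -> In x Fl').
  { intros x h. apply (in_map (@proj1_sig _ _) Fl (exist _ x h)). auto. }
  set (mf := fun p => match excluded_middle_informative (exists y, M' (p,y)) with
                      | left h => cid h | right _ => prj X p end).
  assert (Hmf : forall p, (exists y, M' (p,y)) -> M' (p, mf p)).
  { intros p h. unfold mf. destruct excluded_middle_informative; [|contradiction].
    exact (cid_spec e). }
  assert (Hdom : forall p, S (prj X p) -> exists y, M' (p,y)).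
  { intros [x|x] h; simpl in h; [apply gl|apply gr]; auto. }
  set (idx := fun x => match excluded_middle_informative (exists n, nth_error Fl' n = Some x) with
                      | left h => cid h | right _ => 0 end).
  assert (Hidx : forall x, ~ S x -> nth_error Fl' (idx x) = Some x).
  { intros x h. unfold idx. destruct excluded_middle_informative as [e|e].
    - exact (cid_spec e).
    - exfalso; apply e. apply In_nth_error; auto. }
  set (code := fun p => match p with inl x => 2 * idx x | inr x => 2 * idx x + 1 end).
  assert (Sj : forall n, S (j n)).
  { intro n. apply gl. exists (j (2*n)). right. exists n; left; auto. }
  assert (Smf : forall p, S (prj X p) -> S (mf p)).
  { intros p h. exists p. apply Hmf; auto. }
  exists (fun p => if excluded_middle_informative (S (prj X p)) then mf (inl (mf p))
                   else mf (inr (j (code p)))).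
  intros p p' e.
  destruct (excluded_middle_informative (S (prj X p))) as [s1|s1];
  destruct (excluded_middle_informative (S (prj X p'))) as [s2|s2].
  - assert (e1 := gi _ _ _ (Hmf _ (Hdom (inl (mf p)) (Smf p s1)))
                          ltac:(rewrite e; exact (Hmf _ (Hdom (inl (mf p')) (Smf p' s2))))).
    injection e1 as e1.
    apply (gi p p' (mf p)). apply Hmf; auto. rewrite e1. apply Hmf; auto.
  - exfalso.
    assert (e1 := gi _ _ _ (Hmf _ (Hdom (inl (mf p)) (Smf p s1)))
                          ltac:(rewrite e; exact (Hmf _ (Hdom (inr (j (code p'))) (Sj _))))).
    discriminate.
  - exfalso.
    assert (e1 := gi _ _ _ (Hmf _ (Hdom (inr (j (code p))) (Sj _)))
                          ltac:(rewrite e; exact (Hmf _ (Hdom (inl (mf p')) (Smf p' s2))))).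
    discriminate.
  - assert (e1 := gi _ _ _ (Hmf _ (Hdom (inr (j (code p))) (Sj _)))
                          ltac:(rewrite e; exact (Hmf _ (Hdom (inr (j (code p'))) (Sj _))))).
    injection e1 as e1. apply hj in e1.
    destruct p as [x|x]; destruct p' as [x'|x']; simpl in e1, s1, s2; try lia.
    + assert (idx x = idx x') by lia.
      assert (h1 := Hidx x s1). assert (h2 := Hidx x' s2). rewrite H in h1. rewrite h1 in h2.
      injection h2; intros; subst; auto.
    + assert (idx x = idx x') by lia.
      assert (h1 := Hidx x s1). assert (h2 := Hidx x' s2). rewrite H in h1. rewrite h1 in h2.
      injection h2; intros; subst; auto.
Qed.

Definition nat_lt (n : nat) := {m : nat | m < n}.

Lemma inj_sum X1 X2 Y1 Y2 : inj X1 Y1 -> inj X2 Y2 -> inj (X1 + X2) (Y1 + Y2).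
Proof.
  intros [f hf] [g hg].
  exists (fun p => match p with inl x => inl (f x) | inr x => inr (g x) end).
  intros [a|a] [c|c] e; try discriminate; injection e; intro e'; f_equal; auto.
Qed.

Lemma inj_split I (A B : I -> Prop) : (forall x, A x \/ B x) -> inj I (sig A + sig B).
Proof.
  intro HAB.
  exists (fun x => match excluded_middle_informative (A x) with
                   | left p => inl (exist _ x p)
                   | right np => inr (exist _ x (or_ind (fun a => False_ind _ (np a)) (fun b => b) (HAB x)))
                   end).
  intros a c e.
  destruct (excluded_middle_informative (A a)); destruct (excluded_middle_informative (A c));
    try discriminate; injection e; auto.
Qed.

Lemma inj_finite X (l : list X) : (forall x, In x l) -> inj X (nat_lt (length l)).
Proof.
  intro hl.
  assert (H : forall x, exists n, n < length l /\ nth_error l n = Some x).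
  { intro x. destruct (In_nth_error l x (hl x)) as [n hn]. exists n. split; auto.
    apply nth_error_Some. rewrite hn; discriminate. }
  exists (fun x => exist _ (cid (H x)) (proj1 (cid_spec (H x)))).
  intros a c e. injection e; intro e'.
  assert (h1 := proj2 (cid_spec (H a))). assert (h2 := proj2 (cid_spec (H c))).
  rewrite e' in h1. rewrite h1 in h2. injection h2; auto.
Qed.

Lemma card_core (I I' : Type) (A B : I -> Prop) (P : Type -> Prop)
  (HAB : forall x, A x \/ B x)
  (HB : inj (sig B) I') (HI' : inj I' I) (HA : P (sig A))
  (Pinj : forall Z Z', inj Z' Z -> P Z -> P Z')
  (Psum : forall Z1 Z2, P Z1 -> P Z2 -> P (Z1 + Z2)%type) :
  bij I I' \/ P (I + unit)%type.
Proof.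
  destruct (classic (inj I I')) as [h|h]; [left; apply SB; auto|right].
  assert (a0 : exists a, A a).
  { apply NNPP; intro hn. apply h. apply inj_trans with (sig B); auto.
    exists (fun x => exist B x (or_ind (fun a => False_ind _ (hn (ex_intro _ x a))) (fun b => b) (HAB x))).
    intros a c e. injection e; auto. }
  destruct a0 as [a0 ha0].
  assert (uA : inj unit (sig A)).
  { exists (fun _ => exist _ a0 ha0). intros [] []; auto. }
  assert (Pu : P unit) by (apply (Pinj _ _ uA HA)).
  assert (iAB := inj_split I A B HAB).
  destruct (compar (sig B) (sig A)) as [hba|hab].
  - apply (Pinj ((sig A + sig A) + sig A)%type).
    + apply inj_sum; auto. apply inj_trans with (sig A + sig B)%type; auto.
      apply inj_sum; auto. apply inj_refl.
    + apply Psum; auto.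
  - destruct (classic (finite (sig B))) as [[l hl]|hinf].
    + assert (Pn : forall n, P (nat_lt n)).
      { induction n.
        - apply (Pinj unit); auto. exists (fun _ => tt). intros [m hm]; lia.
        - apply (Pinj (nat_lt n + unit)%type); auto.
          exists (fun m => match lt_dec (proj1_sig m) n with
                           | left p => inl (exist _ (proj1_sig m) p) | right _ => inr tt end).
          intros [a ha] [c hc] e; simpl in e.
          destruct (lt_dec a n); destruct (lt_dec c n); try discriminate.
          + injection e; intro; subst. f_equal; apply proof_irrelevance.
          + assert (a = c) by lia. subst. f_equal; apply proof_irrelevance. }
      apply (Pinj ((sig A + nat_lt (length l)) + unit)%type); auto.
      apply inj_sum; [|apply inj_refl]. apply inj_trans with (sig A + sig B)%type; auto.
      apply inj_sum; [apply inj_refl|]. apply inj_finite; auto.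
    + exfalso. apply h.
      apply inj_trans with (sig A + sig B)%type; auto.
      apply inj_trans with (sig B + sig B)%type; [apply inj_sum; auto; apply inj_refl|].
      apply inj_trans with (sig B); auto. apply double; auto.
Qed.

Lemma bij_sym X Y : bij X Y -> bij Y X.
Proof.
  intros [f [fi fs]]. exists (fun y => cid (fs y)). split.
  - intros a b e. rewrite <- (cid_spec (fs a)), <- (cid_spec (fs b)), e; auto.
  - intro x. exists (f x). apply fi. exact (cid_spec (fs (f x))).
Qed.

Definition nb (G : graph) (x : vert G) := exists y, adj G x y.

Lemma conn_trans G x y z : conn G x y -> conn G y z -> conn G x z.
Proof. induction 1; intros; auto. eapply conn_step; eauto. Qed.

Lemma adj_conn G x y : adj G x y -> conn G x y.
Proof. intro h. eapply conn_step; eauto. apply conn_refl. Qed.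

Lemma conn_sym G x y : conn G x y -> conn G y x.
Proof.
  induction 1. apply conn_refl.
  eapply conn_trans; eauto. apply adj_conn, adj_sym; auto.
Qed.

Lemma emb_conn G H f : embedding G H f -> forall x y, conn G x y -> conn H (f x) (f y).
Proof.
  intros [fi fa] x y; induction 1. apply conn_refl.
  eapply conn_step; eauto. apply fa; auto.
Qed.

Lemma emb_nb G H f : embedding G H f -> forall x, nb G x -> nb H (f x).
Proof. intros [fi fa] x [y hy]. exists (f y). apply fa; auto. Qed.

Lemma iso_conn G x y : ~ nb G x -> conn G x y -> x = y.
Proof. intros hn c. destruct c; auto. exfalso; apply hn; eexists; eauto. Qed.

Lemma nb_conn G x y : nb G x -> conn G x y -> nb G y.
Proof.
  intros hx c. destruct (classic (nb G y)) as [h|h]; auto.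
  apply conn_sym in c. rewrite <- (iso_conn G y x h c) in hx. auto.
Qed.

Lemma ntc_nb G v : nontrivial_comp G v <-> nb G v.
Proof.
  split.
  - intros [x [c ne]]. destruct c. contradiction. eexists; eauto.
  - intros [y hy]. exists y. split. apply adj_conn; auto.
    intro e; subst. apply (adj_irrefl G v hy).
Qed.

Lemma emb_id G : embedding G G (fun x => x).
Proof. split; auto. tauto. Qed.

Lemma emb_comp G H K f g : embedding G H f -> embedding H K g -> embedding G K (fun x => g (f x)).
Proof.
  intros [fi fa] [gi ga]. split; auto.
  intros x y. rewrite fa. apply ga.
Qed.

Lemma embeds_refl G : embeds G G.
Proof. exists (fun x => x). apply emb_id. Qed.

Lemma embeds_trans G H K : embeds G H -> embeds H K -> embeds G K.
Proof. intros [f hf] [g hg]. eexists. eapply emb_comp; eauto. Qed.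

Lemma sig_eq {A} {P : A -> Prop} (a b : sig P) : proj1_sig a = proj1_sig b -> a = b.
Proof.
  destruct a as [a pa], b as [b pb]; simpl; intro e; subst. f_equal. apply proof_irrelevance.
Qed.

Lemma iso_sym G H : isomorphic G H -> isomorphic H G.
Proof.
  intros [f [[fi fa] fs]].
  set (g := fun y => cid (fs y)).
  assert (hg : forall y, f (g y) = y) by (intro y; exact (cid_spec (fs y))).
  exists g. split; [split|].
  - intros a b e. rewrite <- (hg a), <- (hg b), e; auto.
  - intros a b. rewrite (fa (g a) (g b)), !hg. tauto.
  - intro x. exists (f x). apply fi. rewrite hg; auto.
Qed.

Definition sadj (A B : graph) (u v : vert A + vert B) : Prop :=
  match u, v with
  | inl a, inl a' => adj A a a'
  | inr b, inr b' => adj B b b'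
  | _, _ => False
  end.

Lemma sadj_sym A B : forall u v, sadj A B u v -> sadj A B v u.
Proof. intros [a|b] [a'|b']; simpl; auto; apply adj_sym. Qed.
Lemma sadj_irrefl A B : forall u, ~ sadj A B u u.
Proof. intros [a|b]; simpl; apply adj_irrefl. Qed.

Definition gsum (A B : graph) : graph :=
  Graph (vert A + vert B) (sadj A B) (sadj_sym A B) (sadj_irrefl A B).

Definition indep (Z : Type) : graph :=
  Graph Z (fun _ _ => False) (fun _ _ h => h) (fun _ h => h).

Definition iadj (G : graph) (P : vert G -> Prop) (a b : sig P) := adj G (proj1_sig a) (proj1_sig b).
Lemma iadj_sym G P : forall a b, iadj G P a b -> iadj G P b a.
Proof. intros a b; apply adj_sym. Qed.
Lemma iadj_irrefl G P : forall a, ~ iadj G P a a.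
Proof. intros a; apply adj_irrefl. Qed.
Definition induced (G : graph) (P : vert G -> Prop) : graph :=
  Graph (sig P) (iadj G P) (iadj_sym G P) (iadj_irrefl G P).

Lemma emb_induced G P : embeds (induced G P) G.
Proof. exists (@proj1_sig _ _). split. apply sig_eq. tauto. Qed.

Lemma emb_sum_mono A A' B B' : embeds A A' -> embeds B B' -> embeds (gsum A B) (gsum A' B').
Proof.
  intros [f [fi fa]] [g [gi ga]].
  exists (fun u => match u with inl a => inl (f a) | inr b => inr (g b) end : vert (gsum A' B')).
  split.
  - intros [a|b] [a'|b'] e; try discriminate; injection e; intro e'; f_equal; auto.
  - intros [a|b] [a'|b']; simpl; try tauto; auto.
Qed.

Lemma emb_inl A B : embeds A (gsum A B).
Proof.
  exists (fun a => inl a : vert (gsum A B)). split.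
  - intros a b e; injection e; auto.
  - intros a b; simpl; tauto.
Qed.

Lemma indep_emb Z Z' : inj Z' Z -> embeds (indep Z') (indep Z).
Proof. intros [f hf]. exists f. split; auto. simpl; tauto. Qed.

Lemma conn_sum_l A B u v : conn (gsum A B) u v -> forall a, u = inl a -> exists a', v = inl a' /\ conn A a a'.
Proof.
  induction 1 as [u|u w v h c IH]; intros a e.
  - subst. exists a; split; auto. apply conn_refl.
  - subst. destruct w as [w|w]; simpl in h; try contradiction.
    destruct (IH w eq_refl) as [a' [e' c']]. exists a'. split; auto. eapply conn_step; eauto.
Qed.

Lemma conn_sum_r A B u v : conn (gsum A B) u v -> forall b, u = inr b -> exists b', v = inr b' /\ conn B b b'.
Proof.
  induction 1 as [u|u w v h c IH]; intros a e.
  - subst. exists a; split; auto. apply conn_refl.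
  - subst. destruct w as [w|w]; simpl in h; try contradiction.
    destruct (IH w eq_refl) as [a' [e' c']]. exists a'. split; auto. eapply conn_step; eauto.
Qed.

Lemma conn_inl A B a a' : conn A a a' -> conn (gsum A B) (inl a) (inl a').
Proof. induction 1 as [|x y z h c IH]. apply conn_refl. apply conn_step with (inl y); [exact h|exact IH]. Qed.
Lemma conn_inr A B a a' : conn B a a' -> conn (gsum A B) (inr a) (inr a').
Proof. induction 1 as [|x y z h c IH]. apply conn_refl. apply conn_step with (inr y); [exact h|exact IH]. Qed.

Lemma sum_disconnected A B (a : vert A) (b : vert B) : disconnected (gsum A B).
Proof.
  intros [_ hc]. destruct (conn_sum_l A B _ _ (hc (inl a) (inr b)) a eq_refl) as [a' [e _]].
  discriminate.
Qed.

Lemma comp_connected G v : connected (component G v).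
Proof.
  assert (H : forall a x (pa : conn G v a) (px : conn G v x), conn G a x ->
            conn (component G v) (exist _ a pa) (exist _ x px)).
  { intros a x pa px c. revert pa px. induction c as [a|a y x h c IH]; intros pa px.
    - replace px with pa by apply proof_irrelevance. apply conn_refl.
    - assert (py : conn G v y) by (apply conn_trans with a; [exact pa| apply adj_conn; exact h]).
      eapply conn_step with (exist _ y py). exact h. apply IH. }
  split. exact (inhabits (exist _ v (conn_refl G v))).
  intros [a pa] [x px]. apply H. eapply conn_trans. apply conn_sym; eauto. auto.
Qed.

Lemma comp_emb G H e a b : embedding G H e -> conn H (e a) b ->
  embeds (component G a) (component H b).
Proof.
  intros he c.
  assert (k : forall x, conn G a x -> conn H b (e x)).
  { intros x cx. eapply conn_trans. apply conn_sym; eauto. apply (emb_conn G H e he); auto. }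
  exists (fun s => exist _ (e (proj1_sig s)) (k _ (proj2_sig s)) : vert (component H b)).
  destruct he as [ei ea]. split.
  - intros s t E. apply sig_eq. apply ei. exact (f_equal (@proj1_sig _ _) E).
  - intros s t. simpl. unfold comp_adj; simpl. apply ea.
Qed.

Lemma comp_nb G v : nb G v -> nb (component G v) (exist _ v (conn_refl G v)).
Proof.
  intros [y hy]. exists (exist _ y (adj_conn G v y hy)). exact hy.
Qed.

Lemma emb_comp_proj G v : embeds (component G v) G.
Proof. exists (@proj1_sig _ _). split. apply sig_eq. intros; simpl; unfold comp_adj; tauto. Qed.

Fixpoint pw (G : graph) (r : list (vert G)) : Prop :=
  match r with
  | [] => True
  | a :: r' => (forall w, In w r' -> ~ conn G a w) /\ pw G r'
  end.

Lemma pw_eq G r a b : pw G r -> In a r -> In b r -> conn G a b -> a = b.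
Proof.
  induction r as [|c r IH]; simpl; intros hp ha hb hc. contradiction.
  destruct hp as [h1 h2]. destruct ha as [ha|ha]; destruct hb as [hb|hb]; subst; auto.
  - exfalso; eapply h1; eauto.
  - exfalso; eapply h1; eauto. apply conn_sym; auto.
Qed.

Lemma pw_nodup G r : pw G r -> NoDup r.
Proof.
  induction r as [|c r IH]; simpl; intros hp. constructor.
  destruct hp as [h1 h2]. constructor; auto. intro h. apply (h1 c h). apply conn_refl.
Qed.

Lemma nodup_map_inj {A B} (f : A -> B) l : NoDup (map f l) ->
  forall a b, In a l -> In b l -> f a = f b -> a = b.
Proof.
  induction l as [|c l IH]; simpl; intros hn a b ha hb e. contradiction.
  inversion hn as [|x y hni hnd]; subst.
  destruct ha as [ha|ha]; destruct hb as [hb|hb]; subst; auto.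
  - exfalso; apply hni. rewrite e. apply in_map; auto.
  - exfalso; apply hni. rewrite <- e. apply in_map; auto.
Qed.

Definition Pm (X : graph) (m : nat) :=
  exists lst : list (vert X), length lst = m /\ (forall x, In x lst -> nb X x) /\ pw X lst.

Lemma iso_conn_refl X Y f : embedding X Y f -> (forall y, exists x, f x = y) ->
  forall a b, conn Y (f a) (f b) -> conn X a b.
Proof.
  intros [fi fa] fs.
  assert (K : forall u v, conn Y u v -> forall a b, u = f a -> v = f b -> conn X a b).
  { induction 1 as [u|u w v h c IH]; intros a b e1 e2.
    - subst. rewrite (fi a b e2). apply conn_refl.
    - destruct (fs w) as [x ex]. subst. eapply conn_step. apply fa; exact h. apply IH; auto. }
  intros a b c; eapply K; eauto.
Qed.

Lemma Pm_iso X Y m : isomorphic X Y -> Pm X m -> Pm Y m.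
Proof.
  intros [f [hf fs]] [lst [hl [hn hp]]].
  exists (map f lst). split; [rewrite length_map; auto|]. split.
  - intros y hy. apply in_map_iff in hy. destruct hy as [x [e hx]]. subst.
    apply (emb_nb X Y f hf); auto.
  - clear hl hn. induction lst as [|a r IH]; simpl in *; auto.
    destruct hp as [h1 h2]. split; auto.
    intros w hw c. apply in_map_iff in hw. destruct hw as [x [e hx]]. subst.
    apply (h1 x hx). eapply iso_conn_refl; eauto.
Qed.

Lemma Pm_pred X m : Pm X (S m) -> Pm X m.
Proof.
  intros [[|a lst] [hl [hn hp]]]; simpl in hl. discriminate.
  exists lst. split. lia. split. intros; apply hn; simpl; auto. exact (proj2 hp).
Qed.

Lemma Pm_le X m k : Pm X m -> k <= m -> Pm X k.
Proof.
  induction m; intros h hk. replace k with 0 by lia; auto.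
  destruct (Nat.eq_dec k (S m)). subst; auto. apply IHm. apply Pm_pred; auto. lia.
Qed.

Lemma Pm_cover X R m : (forall v, nb X v -> exists w, In w R /\ conn X w v) -> Pm X m -> m <= length R.
Proof.
  intros hc [lst [hl [hn hp]]]. subst m.
  set (rho := fun x => match excluded_middle_informative (exists w, In w R /\ conn X w x) with
                       | left h => cid h | right _ => x end).
  assert (Hr : forall x, In x lst -> In (rho x) R /\ conn X (rho x) x).
  { intros x hx. unfold rho. destruct excluded_middle_informative as [e|e].
    - exact (cid_spec e).
    - exfalso; apply e; auto. }
  rewrite <- (length_map rho lst). apply NoDup_incl_length.
  - apply NoDup_map_NoDup_ForallPairs; [|apply (pw_nodup X); auto].
    intros a b ha hb e. apply (pw_eq X lst a b hp ha hb).
    destruct (Hr a ha) as [_ c1]. destruct (Hr b hb) as [_ c2]. rewrite e in c1.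
    eapply conn_trans. apply conn_sym; eauto. auto.
  - intros w hw. apply in_map_iff in hw. destruct hw as [x [e hx]]. subst. apply Hr; auto.
Qed.

Fixpoint Fam (G C : graph) (n : nat) : graph :=
  match n with 0 => G | S n => gsum (Fam G C n) C end.

Section Case1.
Variables (G C : graph) (L : list (vert G)) (c0 : vert C).
Hypothesis HL : forall v, nb G v -> exists w, In w L /\ conn G w v.
Hypothesis HC : connected C.
Hypothesis Hc0 : nb C c0.
Hypothesis HE : embeds (gsum G C) G.

Lemma Fam_P n : Pm (Fam G C n) n.
Proof.
  induction n as [|n IH]. exists []; simpl; repeat split; auto; contradiction.
  destruct IH as [lst [hl [hn hp]]].
  exists ((inr c0 : vert (gsum (Fam G C n) C)) :: map (fun x => inl x) lst).
  split; [simpl; rewrite length_map; auto|]. split.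
  - intros x [hx|hx].
    + subst. destruct Hc0 as [y hy]. exists (inr y). exact hy.
    + apply in_map_iff in hx. destruct hx as [a [e ha]]. subst.
      destruct (hn a ha) as [y hy]. exists (inl y). exact hy.
  - simpl. split.
    + intros w hw c. apply in_map_iff in hw. destruct hw as [a [e ha]]. subst.
      destruct (conn_sum_r _ _ _ _ c c0 eq_refl) as [b' [e _]]. discriminate.
    + clear hl hn. induction lst as [|a r IH]; simpl in *; auto.
      destruct hp as [h1 h2]. split; auto.
      intros w hw c. apply in_map_iff in hw. destruct hw as [x [e hx]]. subst.
      destruct (conn_sum_l _ _ _ _ c a eq_refl) as [a' [e c']]. injection e as e'.
      subst. eapply h1; eauto.
Qed.

Fixpoint FamR (n : nat) : list (vert (Fam G C n)) :=
  match n with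
  | 0 => L
  | S n => (inr c0 : vert (gsum (Fam G C n) C)) :: map (fun x => inl x) (FamR n)
  end.

Lemma FamR_len n : length (FamR n) = length L + n.
Proof. induction n; simpl; auto. rewrite length_map, IHn. lia. Qed.

Lemma FamR_cover n : forall v, nb (Fam G C n) v -> exists w, In w (FamR n) /\ conn (Fam G C n) w v.
Proof.
  induction n as [|n IH]; simpl; auto.
  intros [a|b] [y hy].
  - destruct y as [y|y]; simpl in hy; try contradiction.
    destruct (IH a (ex_intro _ y hy)) as [w [hw c]]. exists (inl w). split.
    + right. apply in_map; auto.
    + apply conn_inl; auto.
  - exists (inr c0). split; [left; auto|]. apply conn_inr. apply (proj2 HC).
Qed.

Lemma Fam_emb n : embeds (Fam G C n) G.
Proof.
  induction n; simpl. apply embeds_refl.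
  eapply embeds_trans; [|exact HE]. apply emb_sum_mono; auto. apply embeds_refl.
Qed.

Lemma Fam_emb2 n : embeds G (Fam G C n).
Proof.
  induction n; simpl. apply embeds_refl.
  eapply embeds_trans; [exact IHn|]. apply emb_inl.
Qed.

Definition FF (n : nat) := Fam G C (S (length L + n * S (length L))).

Lemma FF_noniso i j : i < j -> ~ isomorphic (FF i) (FF j) /\ ~ isomorphic (FF j) (FF i).
Proof.
  intro hij. unfold FF.
  set (mi := S (length L + i * S (length L))). set (mj := S (length L + j * S (length L))).
  assert (hm : length L + mi < mj).
  { unfold mi, mj. assert (i * S (length L) + S (length L) <= j * S (length L)).
    { replace (i * S (length L) + S (length L)) with (S i * S (length L)) by lia.
      apply Nat.mul_le_mono_r. lia. }
    lia. }
  assert (bound : forall m, Pm (Fam G C mi) m -> m <= length L + mi).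
  { intros m h. rewrite <- FamR_len. eapply Pm_cover; eauto. apply FamR_cover. }
  split; intro hiso.
  - apply iso_sym in hiso. assert (h := Pm_iso _ _ _ hiso (Fam_P mj)).
    apply bound in h. lia.
  - assert (h := Pm_iso _ _ _ hiso (Fam_P mj)). apply bound in h. lia.
Qed.

Lemma case1_family :
  exists F : nat -> graph,
      (forall n, sibling (F n) G /\ disconnected (F n)) /\
      (forall i j, i <> j -> ~ isomorphic (F i) (F j)).
Proof.
  exists FF. split.
  - intro n. unfold FF. split. split. apply Fam_emb. apply Fam_emb2.
    simpl. destruct HE as [e _].
    destruct (Fam_emb2 (length L + n * S (length L))) as [k _].
    apply (sum_disconnected _ _ (k (e (inr c0))) c0).
  - intros i j hij. destruct (Nat.lt_total i j) as [h|[h|h]].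
    + exact (proj1 (FF_noniso i j h)).
    + contradiction.
    + exact (proj2 (FF_noniso j i h)).
Qed.
End Case1.

Definition NG (G : graph) := induced G (nb G).
Definition absorb (G : graph) (Z : Type) := embeds (gsum (NG G) (indep Z)) (NG G).
Definition Isol (G : graph) := sig (fun x : vert G => ~ nb G x).

Lemma absorb_inj G Z Z' : inj Z' Z -> absorb G Z -> absorb G Z'.
Proof.
  intros h a. eapply embeds_trans; [|exact a]. apply emb_sum_mono. apply embeds_refl.
  apply indep_emb; auto.
Qed.

Lemma absorb_sum G Z1 Z2 : absorb G Z1 -> absorb G Z2 -> absorb G (Z1 + Z2)%type.
Proof.
  intros a1 a2. unfold absorb.
  apply embeds_trans with (gsum (gsum (NG G) (indep Z1)) (indep Z2)).
  { exists (fun u => match u with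
                     | inl x => inl (inl x)
                     | inr (inl z) => inl (inr z)
                     | inr (inr z) => inr z end : vert (gsum (gsum (NG G) (indep Z1)) (indep Z2))).
    split.
    - intros [x|[z|z]] [x'|[z'|z']] e; try discriminate; injection e; intros; subst; auto.
    - intros [x|[z|z]] [x'|[z'|z']]; simpl; tauto. }
  eapply embeds_trans; [|exact a2]. apply emb_sum_mono; auto. apply embeds_refl.
Qed.

Definition Qm (X : graph) (m : nat) :=
  exists lst : list (vert X), length lst = m /\ NoDup lst /\ (forall x, In x lst -> ~ nb X x).

Lemma Qm_iso X Y m : isomorphic X Y -> Qm X m -> Qm Y m.
Proof.
  intros [f [[fi fa] fs]] [lst [hl [hn hi]]].
  exists (map f lst). split; [rewrite length_map; auto|]. split.
  - apply NoDup_map_NoDup_ForallPairs; auto. intros a b _ _ e; auto.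
  - intros y hy. apply in_map_iff in hy. destruct hy as [x [e hx]]. subst.
    intros [z hz]. destruct (fs z) as [c ec]. subst. apply (hi x hx). exists c. apply fa; auto.
Qed.

Lemma Qm_cover X R m : (forall v, ~ nb X v -> In v R) -> Qm X m -> m <= length R.
Proof.
  intros hc [lst [hl [hn hi]]]. subst. apply NoDup_incl_length; auto.
  intros x hx. apply hc, hi; auto.
Qed.

Fixpoint K (G : graph) (n : nat) : graph :=
  match n with 0 => NG G | S n => gsum (K G n) (indep unit) end.

Fixpoint KR (G : graph) (n : nat) : list (vert (K G n)) :=
  match n with
  | 0 => []
  | S n => (inr tt : vert (gsum (K G n) (indep unit))) :: map (fun x => inl x) (KR G n)
  end.

Lemma KR_len G n : length (KR G n) = n.
Proof. induction n; simpl; auto. rewrite length_map; auto. Qed.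

Lemma KR_cover G n : forall v, ~ nb (K G n) v -> In v (KR G n).
Proof.
  induction n as [|n IH]; simpl.
  - intros [x px] h. exfalso. apply h. destruct px as [y hy].
    assert (py : nb G y) by (exists x; apply adj_sym; auto).
    exists (exist _ y py). exact hy.
  - intros [a|[]] h; [right|left; auto].
    apply in_map. apply IH. intros [y hy]. apply h. exists (inl y). exact hy.
Qed.

Lemma KR_iso G n : forall v, In v (KR G n) -> ~ nb (K G n) v.
Proof.
  induction n as [|n IH]; simpl. contradiction.
  intros v [hv|hv].
  - subst. intros [[y|y] hy]; simpl in hy; auto.
  - apply in_map_iff in hv. destruct hv as [a [e ha]]. subst.
    intros [[y|y] hy]; simpl in hy; auto. apply (IH a ha). exists y; auto.
Qed.

Lemma KR_nodup G n : NoDup (KR G n).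
Proof.
  induction n; simpl. constructor. constructor.
  - intro h. apply in_map_iff in h. destruct h as [a [e _]]; discriminate.
  - apply NoDup_map_NoDup_ForallPairs; auto. intros a b _ _ e; injection e; auto.
Qed.

Lemma K_Q G n : Qm (K G n) n.
Proof. exists (KR G n). split. apply KR_len. split. apply KR_nodup. apply KR_iso. Qed.

Lemma G_to_NI G : embeds G (gsum (NG G) (indep (Isol G))).
Proof.
  exists (fun x => match excluded_middle_informative (nb G x) with
                   | left p => inl (exist _ x p)
                   | right np => inr (exist _ x np) end : vert (gsum (NG G) (indep (Isol G)))).
  split.
  - intros a b e. destruct (excluded_middle_informative (nb G a));
      destruct (excluded_middle_informative (nb G b)); try discriminate;
      injection e; intro e'; first [exact e' | exact (f_equal (@proj1_sig _ _) e')].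
  - intros a b. destruct (excluded_middle_informative (nb G a)) as [pa|pa];
      destruct (excluded_middle_informative (nb G b)) as [pb|pb]; simpl; try tauto.
    + split; [intro h; apply pb; exists a; apply adj_sym; auto|tauto].
    + split; [intro h; apply pa; exists b; auto|tauto].
    + split; [intro h; apply pa; exists b; auto|tauto].
Qed.

Section Case2.
Variable G : graph.
Hypothesis HA : absorb G (Isol G + unit)%type.

Lemma case2_family :
  exists F : nat -> graph,
      (forall n, sibling (F n) G /\ disconnected (F n)) /\
      (forall i j, i <> j -> ~ isomorphic (F i) (F j)).
Proof.
  assert (au : absorb G unit).
  { eapply absorb_inj; [|exact HA]. exists (fun u => inr u). intros a b e; injection e; auto. }
  assert (aI : absorb G (Isol G)).
  { eapply absorb_inj; [|exact HA]. exists (fun u => inl u). intros a b e; injection e; auto. }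
  assert (KN : forall n, embeds (K G n) (NG G)).
  { induction n; simpl. apply embeds_refl. eapply embeds_trans; [|exact au].
    apply emb_sum_mono; auto. apply embeds_refl. }
  assert (NK : forall n, embeds (NG G) (K G n)).
  { induction n; simpl. apply embeds_refl. eapply embeds_trans; [exact IHn|]. apply emb_inl. }
  assert (GN : embeds G (NG G)) by (eapply embeds_trans; [apply G_to_NI|exact aI]).
  exists (fun n => K G (S (S n))). split.
  - intro n. split. split.
    + eapply embeds_trans; [apply KN|]. apply emb_induced.
    + eapply embeds_trans; [exact GN|apply NK].
    + simpl. apply (sum_disconnected (K G (S n)) (indep unit) (inr tt : vert (gsum (K G n) (indep unit))) tt).
  - assert (H : forall i j, i < j -> ~ isomorphic (K G (S (S i))) (K G (S (S j))) /\
                                     ~ isomorphic (K G (S (S j))) (K G (S (S i)))).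
    { intros i j hij. split; intro hiso.
      - apply iso_sym in hiso. assert (h := Qm_iso _ _ _ hiso (K_Q G (S (S j)))).
        apply (Qm_cover _ _ _ (KR_cover G _)) in h. rewrite KR_len in h. lia.
      - assert (h := Qm_iso _ _ _ hiso (K_Q G (S (S j)))).
        apply (Qm_cover _ _ _ (KR_cover G _)) in h. rewrite KR_len in h. lia. }
    intros i j hij. destruct (Nat.lt_total i j) as [h|[h|h]].
    + exact (proj1 (H i j h)).
    + contradiction.
    + exact (proj2 (H j i h)).
Qed.
End Case2.

Lemma reps G : fin_many_nontrivial_comps G -> exists r,
  (forall w, In w r -> nb G w) /\ pw G r /\ (forall v, nb G v -> exists w, In w r /\ conn G w v).
Proof.
  intros [l hl].
  assert (K : forall l : list (vert G), exists r,
    (forall w, In w r -> nb G w) /\ pw G r /\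
    (forall v, (exists w, In w l /\ nb G w /\ conn G w v) -> exists w, In w r /\ conn G w v)).
  { clear hl l. intro l. induction l as [|a l IH].
    - exists []. split. intros w h; simpl in h; destruct h. split. exact I. intros v [w [h _]]; simpl in h; destruct h.
    - destruct IH as [r [r1 [r2 r3]]].
      destruct (classic (nb G a /\ ~ exists w, In w r /\ conn G w a)) as [[na hn]|hn].
      + exists (a :: r). split; [|split].
        * intros w [e|e]; subst; auto.
        * simpl. split; auto. intros w hw c. apply hn. exists w; split; auto. apply conn_sym; auto.
        * intros v [w [[e|e] [nw c]]].
          -- subst. exists w; split; [left|]; auto.
          -- destruct (r3 v (ex_intro _ w (conj e (conj nw c)))) as [w' [h1 h2]].
             exists w'; split; [right|]; auto.
      + exists r. split; [|split]; auto.
        intros v [w [[e|e] [nw c]]].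
        * subst. destruct (classic (exists w', In w' r /\ conn G w' w)) as [[w' [h1 h2]]|h'].
          -- exists w'; split; auto. eapply conn_trans; eauto.
          -- exfalso; apply hn; split; auto.
        * apply r3. exists w; auto. }
  destruct (K l) as [r [r1 [r2 r3]]]. exists r. split; [|split]; auto.
  intros v nv. apply r3. destruct (hl v (proj2 (ntc_nb G v) nv)) as [w [hw c]].
  exists w. split; [|split]; auto. eapply nb_conn; eauto. apply conn_sym; auto.
Qed.

Lemma mk_case1 (G G2 : graph) e e2 y : embedding G G2 e -> embedding G2 G e2 -> nb G2 y ->
  (forall x, nb G x -> ~ conn G2 (e x) y) -> embeds (gsum G (component G2 y)) G.
Proof.
  intros he he2 ny hd.
  assert (hd' : forall x (c : vert (component G2 y)), nb G x -> e x <> proj1_sig c).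
  { intros x [c pc] nx E. simpl in E. subst. apply (hd x nx). apply conn_sym; auto. }
  assert (nc : forall c : vert (component G2 y), nb G2 (proj1_sig c)).
  { intros [c pc]. simpl. eapply nb_conn; eauto. }
  assert (he' := he). assert (he2' := he2).
  destruct he as [ei ea]. destruct he2 as [e2i e2a].
  exists (fun u => match u with
                   | inl x => if excluded_middle_informative (nb G x) then e2 (e x) else x
                   | inr c => e2 (proj1_sig c) end).
  split.
  - intros [x|c] [x'|c'] E.
    + destruct (excluded_middle_informative (nb G x)) as [n|n];
      destruct (excluded_middle_informative (nb G x')) as [n'|n']; f_equal.
      * apply ei, e2i; auto.
      * exfalso. apply n'. rewrite <- E. apply (emb_nb _ _ _ he2'), (emb_nb _ _ _ he'); auto.
      * exfalso. apply n. rewrite E. apply (emb_nb _ _ _ he2'), (emb_nb _ _ _ he'); auto.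
      * auto.
    + destruct (excluded_middle_informative (nb G x)) as [n|n].
      * apply e2i in E. exfalso; eapply hd'; eauto.
      * exfalso. apply n. rewrite E. apply (emb_nb _ _ _ he2'); auto.
    + destruct (excluded_middle_informative (nb G x')) as [n|n].
      * apply e2i in E. exfalso; eapply hd'; eauto.
      * exfalso. apply n. rewrite <- E. apply (emb_nb _ _ _ he2'); auto.
    + f_equal. apply sig_eq. apply e2i; auto.
  - intros [x|c] [x'|c']; simpl.
    + destruct (excluded_middle_informative (nb G x)) as [n|n];
      destruct (excluded_middle_informative (nb G x')) as [n'|n'].
      * rewrite <- e2a. apply ea.
      * split; intro h; exfalso; apply n'.
        -- exists x; apply adj_sym; auto.
        -- exists (e2 (e x)); apply adj_sym; auto.
      * split; intro h; exfalso; apply n.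
        -- exists x'; auto.
        -- exists (e2 (e x')); auto.
      * tauto.
    + destruct (excluded_middle_informative (nb G x)) as [n|n].
      * split; [tauto|]. rewrite <- e2a. intro h.
        apply (hd x n). eapply conn_trans. apply adj_conn; exact h.
        apply conn_sym. exact (proj2_sig c').
      * split; [tauto|]. intro h. apply n. eexists; eauto.
    + destruct (excluded_middle_informative (nb G x')) as [n|n].
      * split; [tauto|]. rewrite <- e2a. intro h.
        apply (hd x' n). eapply conn_trans. apply adj_conn; apply adj_sym; exact h.
        apply conn_sym. exact (proj2_sig c).
      * split; [tauto|]. intro h. apply n. eexists; apply adj_sym; eauto.
    + unfold comp_adj. apply e2a.
Qed.

Lemma absorb_of (G H : graph) a b (Z : Type) (z : Z -> vert H) :
  embedding G H a -> embedding H G b -> (forall t, ~ nb H (z t)) -> (forall t, nb G (b (z t))) ->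
  (forall t t', z t = z t' -> t = t') -> absorb G Z.
Proof.
  intros ha hb hz hbz zi.
  assert (ha' := ha). assert (hb' := hb).
  destruct ha as [ai aa]. destruct hb as [bi ba].
  exists (fun u => match u with
                   | inl x => exist _ (b (a (proj1_sig x)))
                                (emb_nb _ _ _ hb' _ (emb_nb _ _ _ ha' _ (proj2_sig x)))
                   | inr t => exist _ (b (z t)) (hbz t) end : vert (NG G)).
  split.
  - intros [x|t] [x'|t'] E; apply (f_equal (@proj1_sig _ _)) in E; simpl in E.
    + f_equal. apply sig_eq. apply ai, bi; auto.
    + exfalso. apply bi in E. apply (hz t'). rewrite <- E. apply (emb_nb _ _ _ ha'). exact (proj2_sig x).
    + exfalso. apply bi in E. apply (hz t). rewrite E. apply (emb_nb _ _ _ ha'). exact (proj2_sig x').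
    + f_equal. apply zi, bi; auto.
  - intros [x|t] [x'|t']; simpl; unfold iadj; simpl.
    + rewrite <- ba. apply aa.
    + rewrite <- ba. split; [tauto|]. intro h. apply (hz t'). exists (a (proj1_sig x)). apply adj_sym; auto.
    + rewrite <- ba. split; [tauto|]. intro h. apply (hz t). exists (a (proj1_sig x')). auto.
    + rewrite <- ba. split; [tauto|]. intro h. apply (hz t). eexists; eauto.
Qed.

Lemma cycle {T} (s : T -> T) (r : list T) : (forall x, In x r -> In (s x) r) ->
  (forall a b, In a r -> In b r -> s a = s b -> a = b) ->
  forall w, In w r -> exists q, Nat.iter (S q) s w = w.
Proof.
  intros hs hi w hw.
  set (u := fun n => Nat.iter n s w).
  assert (Hu : forall n, In (u n) r).
  { induction n as [|n IH]. exact hw. change (In (s (u n)) r). apply hs; exact IH. }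
  assert (P : exists a b, a < b /\ u a = u b).
  { apply NNPP; intro hn.
    assert (ND : NoDup (map u (seq 0 (S (length r))))).
    { apply NoDup_map_NoDup_ForallPairs; [|apply seq_NoDup].
      intros a b _ _ e. destruct (Nat.lt_total a b) as [h|[h|h]]; auto.
      - exfalso; apply hn; eauto.
      - exfalso; apply hn; eauto. }
    apply NoDup_incl_length with (l' := r) in ND.
    - rewrite length_map, length_seq in ND. lia.
    - intros x hx. apply in_map_iff in hx. destruct hx as [n [e _]]. subst. apply Hu. }
  destruct P as [a [b' [hab e]]].
  assert (C : forall a d, u a = u (a + d) -> w = u d).
  { intro a0. induction a0 as [|a0 IH]; intros d E.
    - exact E.
    - change (s (u a0) = s (u (a0 + d))) in E. apply IH. apply hi; auto. }
  exists (b' - a - 1). replace (S (b' - a - 1)) with (b' - a) by lia.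
  symmetry. apply (C a). replace (a + (b' - a)) with b' by lia. auto.
Qed.

Section Main.
Variables (G G' : graph) (f : vert G -> vert G') (g : vert G' -> vert G).
Hypothesis Hf : embedding G G' f.
Hypothesis Hg : embedding G' G g.
Hypothesis Hrig : forall v H', connected H' -> equimorphic H' (component G v) ->
                               isomorphic H' (component G v).
Hypothesis NC1 : forall (C : graph) (c0 : vert C), connected C -> nb C c0 -> ~ embeds (gsum G C) G.
Hypothesis NC2 : ~ absorb G (Isol G + unit)%type.
Variable r : list (vert G).
Hypothesis Hr1 : forall w, In w r -> nb G w.
Hypothesis Hr2 : pw G r.
Hypothesis Hr3 : forall v, nb G v -> exists w, In w r /\ conn G w v.

Let h x := g (f x).
Let Hh : embedding G G h := emb_comp G G' G f g Hf Hg.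

Lemma NC1' G2 e e2 y : embedding G G2 e -> embedding G2 G e2 -> nb G2 y ->
  ~ (forall x, nb G x -> ~ conn G2 (e x) y).
Proof.
  intros he he2 ny H. apply (NC1 (component G2 y) (exist _ y (conn_refl _ y))).
  apply comp_connected. apply comp_nb; auto. apply mk_case1 with e e2; auto.
Qed.

Let sg w := match excluded_middle_informative (exists t, In t r /\ conn G (h w) t) with
            | left p => cid p | right _ => w end.

Lemma sg_spec w : nb G w -> In (sg w) r /\ conn G (h w) (sg w).
Proof.
  intro nw. unfold sg. destruct excluded_middle_informative as [p|p].
  - exact (cid_spec p).
  - exfalso. apply p. destruct (Hr3 (h w)) as [t [ht c]].
    + apply (emb_nb _ _ _ Hh); auto.
    + exists t; split; auto. apply conn_sym; auto.
Qed.

Lemma sg_uniq w t : nb G w -> In t r -> conn G (h w) t -> t = sg w.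
Proof.
  intros nw ht c. destruct (sg_spec w nw) as [h1 h2].
  apply (pw_eq G r t (sg w) Hr2 ht h1). eapply conn_trans. apply conn_sym; eauto. auto.
Qed.

Lemma sg_in w : In w r -> In (sg w) r.
Proof. intro hw. exact (proj1 (sg_spec w (Hr1 w hw))). Qed.

Lemma sg_surj t : In t r -> exists w, In w r /\ sg w = t.
Proof.
  intro ht. apply NNPP; intro hn.
  apply (NC1' G h (fun x => x) t Hh (emb_id G) (Hr1 t ht)).
  intros x nx c. destruct (Hr3 x nx) as [w [hw cw]]. apply hn. exists w. split; auto.
  symmetry. apply sg_uniq; auto. eapply conn_trans; [apply (emb_conn _ _ _ Hh); exact cw | exact c].
Qed.

Lemma sg_inj a b : In a r -> In b r -> sg a = sg b -> a = b.
Proof.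
  apply nodup_map_inj.
  apply (NoDup_incl_NoDup (l := r)).
  - apply (pw_nodup G); auto.
  - rewrite length_map; auto.
  - intros t ht. destruct (sg_surj t ht) as [w [hw e]]. subst. apply in_map; auto.
Qed.

Lemma iter_in w : In w r -> forall n, In (Nat.iter n sg w) r.
Proof. intros hw n; induction n as [|n IH]. exact hw. change (In (sg (Nat.iter n sg w)) r). apply sg_in; auto. Qed.

Lemma comp_step x : nb G x -> embeds (component G x) (component G (sg x)).
Proof. intro nx. apply comp_emb with h. exact Hh. exact (proj2 (sg_spec x nx)). Qed.

Lemma chain_emb w : In w r -> forall n, embeds (component G (sg w)) (component G (Nat.iter (S n) sg w)).
Proof.
  intros hw n. induction n as [|n IH]. apply embeds_refl.
  eapply embeds_trans; [exact IH|]. change (Nat.iter (S (S n)) sg w) with (sg (Nat.iter (S n) sg w)).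
  apply comp_step. apply Hr1. apply iter_in; auto.
Qed.

Lemma back w : In w r -> embeds (component G (sg w)) (component G w).
Proof.
  intro hw. destruct (cycle sg r sg_in sg_inj w hw) as [q e].
  assert (k := chain_emb w hw q). rewrite e in k. exact k.
Qed.

Lemma HD w : In w r -> isomorphic (component G' (f w)) (component G w).
Proof.
  intro hw. apply Hrig. apply comp_connected. split.
  - eapply embeds_trans; [|apply back; auto]. apply comp_emb with g. exact Hg.
    exact (proj2 (sg_spec w (Hr1 w hw))).
  - apply comp_emb with f; auto. apply conn_refl.
Qed.

Lemma cover' y : nb G' y -> exists w, In w r /\ conn G' (f w) y.
Proof.
  intro ny. apply NNPP; intro hn. apply (NC1' G' f g y Hf Hg ny).
  intros x nx c. destruct (Hr3 x nx) as [w [hw cw]]. apply hn. exists w; split; auto.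
  eapply conn_trans. apply (emb_conn _ _ _ Hf); exact cw. exact c.
Qed.

Lemma uniq' w1 w2 y : In w1 r -> In w2 r -> conn G' (f w1) y -> conn G' (f w2) y -> w1 = w2.
Proof.
  intros h1 h2 c1 c2.
  assert (c : conn G' (f w1) (f w2)) by (eapply conn_trans; [exact c1|apply conn_sym; exact c2]).
  apply (emb_conn _ _ _ Hg) in c.
  assert (c' : conn G (h w1) (sg w2)) by (eapply conn_trans; [exact c|exact (proj2 (sg_spec w2 (Hr1 w2 h2)))]).
  assert (e := sg_uniq w1 (sg w2) (Hr1 w1 h1) (sg_in w2 h2) c').
  symmetry. apply sg_inj; auto.
Qed.

Lemma isol_bij : bij (Isol G') (Isol G).
Proof.
  set (A := fun s : Isol G => nb G' (f (proj1_sig s))).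
  assert (aA : absorb G (sig A)).
  { apply (absorb_of G G (fun x => x) h (sig A) (fun s => proj1_sig (proj1_sig s)) (emb_id G) Hh).
    - intro s. exact (proj2_sig (proj1_sig s)).
    - intro s. apply (emb_nb _ _ _ Hg). exact (proj2_sig s).
    - intros s s' e. apply sig_eq, sig_eq; auto. }
  assert (iB : inj (sig (fun s => ~ A s)) (Isol G')).
  { exists (fun s : sig (fun s => ~ A s) => exist (fun y => ~ nb G' y) (f (proj1_sig (proj1_sig s))) (proj2_sig s) : Isol G').
    intros s s' e. apply (f_equal (@proj1_sig _ _)) in e. simpl in e.
    apply (proj1 Hf) in e. apply sig_eq, sig_eq; auto. }
  set (A' := fun t : Isol G' => nb G (g (proj1_sig t))).
  assert (aA' : absorb G (sig A')).
  { apply (absorb_of G G' f g (sig A') (fun s => proj1_sig (proj1_sig s)) Hf Hg).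
    - intro s. exact (proj2_sig (proj1_sig s)).
    - intro s. exact (proj2_sig s).
    - intros s s' e. apply sig_eq, sig_eq; auto. }
  assert (iB' : inj (sig (fun s => ~ A' s)) (Isol G)).
  { exists (fun s : sig (fun s => ~ A' s) => exist (fun y => ~ nb G y) (g (proj1_sig (proj1_sig s))) (proj2_sig s) : Isol G).
    intros s s' e. apply (f_equal (@proj1_sig _ _)) in e. simpl in e.
    apply (proj1 Hg) in e. apply sig_eq, sig_eq; auto. }
  destruct (compar (Isol G) (Isol G')) as [i1|i2].
  - destruct (card_core (Isol G') (Isol G) A' (fun s => ~ A' s) (absorb G)
               (fun x => classic _) iB' i1 aA' (absorb_inj G) (absorb_sum G)) as [b|b]; auto.
    exfalso. apply NC2. eapply absorb_inj; [|exact b]. apply inj_sum; auto. apply inj_refl.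
  - destruct (card_core (Isol G) (Isol G') A (fun s => ~ A s) (absorb G)
               (fun x => classic _) iB i2 aA (absorb_inj G) (absorb_sum G)) as [b|b].
    + apply bij_sym; auto.
    + exfalso; auto.
Qed.

Lemma main_iso : isomorphic G' G.
Proof.
  destruct isol_bij as [be [bi bs]].
  set (Th := fun w => match excluded_middle_informative
                         (isomorphic (component G' (f w)) (component G w)) with
                      | left p => cid p
                      | right _ => (fun _ => exist _ w (conn_refl G w))
                      end : vert (component G' (f w)) -> vert (component G w)).
  assert (HT : forall w, In w r -> embedding _ _ (Th w) /\ forall z, exists d, Th w d = z).
  { intros w hw. unfold Th. destruct excluded_middle_informative as [p|p].
    - exact (cid_spec p).
    - exfalso; apply p; apply HD; auto. }
  set (Phi := fun y => match excluded_middle_informative (exists w, In w r /\ conn G' (f w) y) with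
     | left p => proj1_sig (Th (cid p) (exist (fun x => conn G' (f (cid p)) x) y (proj2 (cid_spec p))))
     | right _ => match excluded_middle_informative (~ nb G' y) with
                  | left q => proj1_sig (be (exist _ y q)) | right _ => g y end end).
  assert (S1 : forall w y (hw : In w r) (c : conn G' (f w) y),
             Phi y = proj1_sig (Th w (exist (fun x => conn G' (f w) x) y c))).
  { intros w y hw c. unfold Phi. destruct excluded_middle_informative as [p|p]; [|exfalso; apply p; eauto].
    assert (e : cid p = w) by
      (apply (uniq' _ _ y); [exact (proj1 (cid_spec p)) | exact hw | exact (proj2 (cid_spec p)) | exact c]).
    revert e. generalize (proj2 (cid_spec p)). generalize (cid p). intros w0 c0 e. subst w0.
    rewrite (proof_irrelevance _ c0 c). reflexivity. }
  assert (S2 : forall y (q : ~ nb G' y), Phi y = proj1_sig (be (exist _ y q))).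
  { intros y q. unfold Phi. destruct excluded_middle_informative as [p|p].
    - exfalso. destruct p as [w [hw c]]. apply q. eapply nb_conn; [|exact c].
      apply (emb_nb _ _ _ Hf); apply Hr1; auto.
    - destruct excluded_middle_informative as [q'|q']; [|contradiction].
      rewrite (proof_irrelevance _ q' q). reflexivity. }
  assert (K1 : forall w y (c : conn G' (f w) y), conn G w (proj1_sig (Th w (exist (fun x => conn G' (f w) x) y c)))).
  { intros. exact (proj2_sig _). }
  assert (K2 : forall y (q : ~ nb G' y), ~ nb G (Phi y)).
  { intros y q. rewrite (S2 y q). exact (proj2_sig (be (exist _ y q))). }
  exists Phi. split; [split|].
  - intros y1 y2 E.
    destruct (classic (nb G' y1)) as [n1|n1]; destruct (classic (nb G' y2)) as [n2|n2].
    + destruct (cover' y1 n1) as [w1 [hw1 c1]]. destruct (cover' y2 n2) as [w2 [hw2 c2]].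
      assert (k1 := K1 w1 y1 c1). assert (k2 := K1 w2 y2 c2).
      rewrite <- (S1 w1 y1 hw1 c1) in k1. rewrite <- (S1 w2 y2 hw2 c2) in k2.
      assert (e : w1 = w2).
      { apply (pw_eq G r w1 w2 Hr2 hw1 hw2). rewrite E in k1. eapply conn_trans; [exact k1|].
        apply conn_sym; auto. }
      subst w2. rewrite (S1 w1 y1 hw1 c1), (S1 w1 y2 hw2 c2) in E.
      destruct (HT w1 hw1) as [[ti ta] ts]. apply sig_eq in E. apply ti in E.
      exact (f_equal (@proj1_sig _ _) E).
    + exfalso. apply (K2 y2 n2). rewrite <- E.
      destruct (cover' y1 n1) as [w1 [hw1 c1]]. assert (k1 := K1 w1 y1 c1).
      rewrite <- (S1 w1 y1 hw1 c1) in k1. eapply nb_conn; [|exact k1]. apply Hr1; auto.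
    + exfalso. apply (K2 y1 n1). rewrite E.
      destruct (cover' y2 n2) as [w2 [hw2 c2]]. assert (k2 := K1 w2 y2 c2).
      rewrite <- (S1 w2 y2 hw2 c2) in k2. eapply nb_conn; [|exact k2]. apply Hr1; auto.
    + rewrite (S2 y1 n1), (S2 y2 n2) in E. apply sig_eq in E. apply bi in E.
      exact (f_equal (@proj1_sig _ _) E).
  - intros y1 y2. split.
    + intro a.
      assert (n1 : nb G' y1) by (exists y2; auto).
      destruct (cover' y1 n1) as [w [hw c1]].
      assert (c2 : conn G' (f w) y2) by (eapply conn_trans; [exact c1|apply adj_conn; exact a]).
      rewrite (S1 w y1 hw c1), (S1 w y2 hw c2).
      destruct (HT w hw) as [[ti ta] ts].
      apply (ta (exist _ y1 c1) (exist _ y2 c2)). exact a.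
    + intro a.
      destruct (classic (nb G' y1)) as [n1|n1];
        [|exfalso; apply (K2 y1 n1); exists (Phi y2); exact a].
      destruct (classic (nb G' y2)) as [n2|n2];
        [|exfalso; apply (K2 y2 n2); exists (Phi y1); apply adj_sym; exact a].
      destruct (cover' y1 n1) as [w1 [hw1 c1]]. destruct (cover' y2 n2) as [w2 [hw2 c2]].
      assert (k1 := K1 w1 y1 c1). assert (k2 := K1 w2 y2 c2).
      rewrite <- (S1 w1 y1 hw1 c1) in k1. rewrite <- (S1 w2 y2 hw2 c2) in k2.
      assert (e : w1 = w2).
      { apply (pw_eq G r w1 w2 Hr2 hw1 hw2). eapply conn_trans; [exact k1|].
        eapply conn_trans; [apply adj_conn; exact a|]. apply conn_sym; auto. }
      subst w2. rewrite (S1 w1 y1 hw1 c1), (S1 w1 y2 hw2 c2) in a.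
      destruct (HT w1 hw1) as [[ti ta] ts].
      apply (ta (exist _ y1 c1) (exist _ y2 c2)). exact a.
  - intro x. destruct (classic (nb G x)) as [n|n].
    + destruct (Hr3 x n) as [w [hw cw]]. destruct (HT w hw) as [_ ts].
      destruct (ts (exist (fun z => conn G w z) x cw)) as [[y c] E]. exists y.
      rewrite (S1 w y hw c). rewrite E. reflexivity.
    + destruct (bs (exist _ x n)) as [[y q] E]. exists y. rewrite (S2 y q), E. reflexivity.
Qed.
End Main.

Theorem lemma2p1 (G : graph) :
  disconnected G ->
  fin_many_nontrivial_comps G ->
  (forall v : vert G, forall H' : graph,
      connected H' -> equimorphic H' (component G v) ->
      isomorphic H' (component G v)) ->
  (exists F : nat -> graph,
      (forall n, sibling (F n) G /\ disconnected (F n)) /\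
      (forall i j, i <> j -> ~ isomorphic (F i) (F j)))
  \/ (forall G' : graph, sibling G' G -> isomorphic G' G).
Proof.
  intros Hdis Hfin Hrig.
  destruct (classic (exists F : nat -> graph,
      (forall n, sibling (F n) G /\ disconnected (F n)) /\
      (forall i j, i <> j -> ~ isomorphic (F i) (F j)))) as [HL|HL]; [left; exact HL|right].
  intros G' [[g Hg] [f Hf]].
  destruct (reps G Hfin) as [r [Hr1 [Hr2 Hr3]]].
  refine (main_iso G G' f g Hf Hg Hrig _ _ r Hr1 Hr2 Hr3).
  - intros C c0 hC nc0 hE. apply HL. destruct Hfin as [l hl].
    apply (case1_family G C l c0); auto.
    intros v nv. destruct (hl v (proj2 (ntc_nb G v) nv)) as [w [hw c]]. eauto.
  - intro hA. apply HL. apply case2_family; auto.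
Qed.
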